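(* Let $d\ge2$ and let $a_1,\ldots,a_d>1$ be real numbers with $\frac1{a_1}+\cdots+\frac1{a_d}=1$. Let $S=\operatorname{conv}(\{0,a_1e_1,\ldots,a_de_d\})\subseteq\mathbb{R}^d$. Then for $v\in\mathbb{R}^d$, the translate $S+v$ contains no integral point in its interior if and only if $v\in\mathbb{Z}^d$.
   Context: $e_1,\ldots,e_d$ are the standard unit vectors of $\mathbb{R}^d$. *)

(* Defs.v *)
From Stdlib Require Import Reals ZArith.
From mathcomp Require Import all_boot.
Set Implicit Arguments. Unset Strict Implicit. Unset Printing Implicit Defensive.

Open Scope R_scope.

Definition pt (d : nat) := 'I_d -> R.

Notation "\rsum_ ( i < n ) F" := (\big[Rplus/R0]_(i < n) F)
  (at level 41, F at level 41, i, n at level 50).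

Definition unitvec (d : nat) (i : 'I_d) : pt d :=
  fun j => if i == j then 1 else 0.

Definition scalev (d : nat) (c : R) (x : pt d) : pt d := fun j => c * x j.

Definition conv_hull (d n : nat) (p : 'I_n -> pt d) : pt d -> Prop :=
  fun x => exists mu : 'I_n -> R,
    (forall k, 0 <= mu k) /\ \rsum_(k < n) mu k = 1 /\
    forall j, x j = \rsum_(k < n) (mu k * p k j).

(* topological interiorRd in R^d (product/Euclidean topology, via sup-norm balls) *)
Definition interiorRd (d : nat) (A : pt d -> Prop) : pt d -> Prop :=
  fun x => exists eps, 0 < eps /\
    forall y : pt d, (forall j, Rabs (y j - x j) < eps) -> A y.

Definition translateRd (d : nat) (A : pt d -> Prop) (v : pt d) : pt d -> Prop :=
  fun x => A (fun j => x j - v j).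

Definition integral_pt (d : nat) (x : pt d) : Prop :=
  forall j, exists z : Z, x j = IZR z.

Definition simplex_vertices (d : nat) (a : 'I_d -> R) : 'I_d.+1 -> pt d :=
  fun k => match unlift ord0 k with
           | None => fun _ => 0
           | Some i => scalev (a i) (unitvec i)
           end.

Definition simplexS (d : nat) (a : 'I_d -> R) : pt d -> Prop :=
  conv_hull (simplex_vertices a).

(* Main.v *)
Require Import Defs.
From HB Require Import structures.
From Stdlib Require Import Reals ZArith Lra Lia Classical.
From mathcomp Require Import all_boot.
Open Scope R_scope.

HB.instance Definition _ := Monoid.isComLaw.Build R R0 Rplus (fun x y z => esym (Rplus_assoc x y z)) Rplus_comm Rplus_0_l.

Lemma sum_le n (F G : 'I_n -> R) : (forall i, F i <= G i) -> \rsum_(i < n) F i <= \rsum_(i < n) G i.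
Proof. move=> H; apply: (big_ind2 Rle) => //; [lra| move=> *; lra]. Qed.

Lemma sum_lt n (F G : 'I_n -> R) j : (forall i, F i <= G i) -> F j < G j -> \rsum_(i < n) F i < \rsum_(i < n) G i.
Proof.
move=> H Hj; rewrite (bigD1 j) //= [X in _ < X](bigD1 j) //=.
have := @sum_le n (fun i => if i != j then F i else 0) (fun i => if i != j then G i else 0).
rewrite -!big_mkcond /=. move=> H2.
have H3 := H2 (fun i => ltac:(case: (i != j); [apply: H | apply: Rle_refl])).
apply: Rplus_lt_le_compat => //.
Qed.

Lemma sum_add n (F G : 'I_n -> R) : \rsum_(i < n) (F i + G i) = \rsum_(i < n) F i + \rsum_(i < n) G i.
Proof. exact: big_split. Qed.

Lemma sum_scal n (F : 'I_n -> R) c : \rsum_(i < n) (c * F i) = c * \rsum_(i < n) F i.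
Proof.
apply: (big_ind2 (fun x y => x = c * y)); [ring | move=> ????->->; ring | done].
Qed.

Lemma sv_sum d (a : 'I_d -> R) (mu : 'I_d.+1 -> R) j :
  \rsum_(k < d.+1) (mu k * simplex_vertices a k j) = mu (lift ord0 j) * a j.
Proof.
rewrite big_ord_recl /simplex_vertices unlift_none.
rewrite (bigD1 j) //= liftK /scalev /unitvec eqxx big1.
  ring.
move=> i Hi; rewrite liftK /scalev /unitvec (negbTE Hi); ring.
Qed.
Lemma S_iff d (a : 'I_d -> R) (ha : forall i, 0 < a i) z :
  simplexS a z <-> (forall j, 0 <= z j) /\ \rsum_(j < d) (z j / a j) <= 1.
Proof.
split.
- move=> [mu [Hmu [Hs Hz]]].
  have Hz' : forall j, z j = mu (lift ord0 j) * a j by move=> j; rewrite Hz sv_sum.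
  split.
    move=> j; rewrite Hz'; have := Hmu (lift ord0 j); have := ha j; nra.
  have -> : \rsum_(j < d) (z j / a j) = \rsum_(j < d) mu (lift ord0 j).
    apply: eq_bigr => j _; rewrite Hz'; have := ha j; move=> ?; field; lra.
  move: Hs; rewrite big_ord_recl; have := Hmu ord0; lra.
- move=> [Hz Hs].
  exists (fun k => match unlift ord0 k with None => 1 - \rsum_(j < d) (z j / a j) | Some i => z i / a i end).
  split; [|split].
  + move=> k; case: (unlift ord0 k) => [i|]; last lra.
    have := Hz i; have := ha i; move=> ??; apply: Rmult_le_pos => //; apply: Rlt_le; apply/Rinv_0_lt_compat/ha.
  + rewrite big_ord_recl unlift_none.
    rewrite [X in _ + X](eq_bigr (fun i => z i / a i)); last by move=> i _; rewrite liftK.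
    have E : forall x y : R, x = y -> 1 - x + y = 1 by move=> ??->; ring.
    by apply: E.
  + move=> j; rewrite sv_sum liftK; have := ha j; move=> ?; field; lra.
Qed.

Lemma interior_S d (a : 'I_d -> R) (ha : forall i, 0 < a i) (j0 : 'I_d) (v x : pt d) :
  interiorRd (translateRd (simplexS a) v) x ->
  (forall j, 0 < x j - v j) /\ \rsum_(j < d) ((x j - v j) / a j) < 1.
Proof.
move=> [eps [He H]].
have H1 := H (fun j => x j - eps / 2).
have H2 := H (fun j => x j + eps / 2).
have B : forall c, Rabs c = eps / 2 -> Rabs c < eps by move=> c ->; lra.
have T1 := H1 (fun j => ltac:(apply: B; replace (x j - eps / 2 - x j) with (-(eps/2)) by ring; rewrite Rabs_Ropp Rabs_right; lra)).
have T2 := H2 (fun j => ltac:(apply: B; replace (x j + eps / 2 - x j) with (eps/2) by ring; rewrite Rabs_right; lra)).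
have [_ S2] := proj1 (@S_iff d a ha _) T2.
have [S1 _] := proj1 (@S_iff d a ha _) T1.
split.
  move=> j; have := S1 j; lra.
apply: Rlt_le_trans S2.
apply: (@sum_lt _ _ _ j0) => [i|].
  apply: Rmult_le_compat_r; [apply/Rlt_le/Rinv_0_lt_compat/ha | lra].
apply: Rmult_lt_compat_r; [apply/Rinv_0_lt_compat/ha | lra].
Qed.

Lemma min_exists n (F : 'I_n -> R) s : 0 < s -> (forall i, 0 < F i) ->
  exists eps, 0 < eps /\ eps <= s /\ forall i, eps <= F i.
Proof.
elim: n F => [|n IH] F Hs HF.
  exists s; split => //; split; [lra | by case].
have [e [He1 [He2 He3]]] := IH (fun i => F (lift ord0 i)) Hs (fun i => HF _).
exists (Rmin e (F ord0)); split; [by apply: Rmin_pos|split].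
  apply: Rle_trans (Rmin_l _ _) He2.
move=> i; case: (unliftP ord0 i) => [j ->|->].
  apply: Rle_trans (Rmin_l _ _) (He3 j).
apply: Rmin_r.
Qed.

Theorem mainTheorem17 (d : nat) (hd : (2 <= d)%nat) (a : 'I_d -> R)
  (ha : forall i, 1 < a i) (hsum : \rsum_(i < d) / a i = 1) (v : pt d) :
  (~ exists x : pt d, integral_pt x /\ interiorRd (translateRd (simplexS a) v) x)
  <-> integral_pt v.
Proof.
have ha' : forall i, 0 < a i by move=> i; have := ha i; lra.
have hia : forall i, 0 < / a i by move=> i; apply/Rinv_0_lt_compat/ha'.
split.
- move=> Hno; apply: NNPP => Hv; apply: Hno.
  have [j1 Hj1] := not_all_ex_not _ _ Hv.
  pose x := fun j => IZR (up (v j)).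
  have Ht : forall j, 0 < x j - v j /\ x j - v j <= 1.
    move=> j; have [A1 A2] := archimed (v j); rewrite /x; lra.
  have Ht1 : x j1 - v j1 < 1.
    have [A1 A2] := Ht j1; case: (Rle_lt_or_eq_dec _ _ A2) => // E.
    exfalso; apply: Hj1; exists (up (v j1) - 1)%Z; rewrite minus_IZR /x in E *; lra.
  have Hlt : \rsum_(j < d) ((x j - v j) / a j) < 1.
    rewrite -hsum; apply: (@sum_lt _ _ _ j1) => [i|].
      have [A1 A2] := Ht i; have := hia i; rewrite /Rdiv; nra.
    have [A1 A2] := Ht j1; have := hia j1; rewrite /Rdiv; nra.
  have [eps [He1 [He2 He3]]] := @min_exists d (fun j => x j - v j)
     (1 - \rsum_(j < d) ((x j - v j) / a j)) ltac:(lra) (fun j => proj1 (Ht j)).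
  exists x; split.
    by move=> j; exists (up (v j)).
  exists eps; split => // y Hy.
  apply (proj2 (@S_iff d a ha' _)); split.
    move=> j; have := He3 j; have := Hy j; move=> /Rabs_def2 [B1 B2] /= ?; lra.
  apply: (@Rle_trans _ (\rsum_(j < d) ((x j - v j) / a j + eps * / a j))).
    apply: sum_le => j; have := He3 j; have := Hy j; move=> /Rabs_def2 [B1 B2] /= ?.
    have := hia j; rewrite /Rdiv; nra.
  rewrite sum_add sum_scal hsum /=.
  have E : forall p q : R, q <= 1 - p -> p + q * 1 <= 1 by move=> ??; lra.
  exact: E He2.
- move=> Hv [x [Hx Hint]].
  have j0 : 'I_d by exists 0%N; apply: leq_trans hd.
  have [P1 P2] := @interior_S d a ha' j0 v x Hint.
  have Hge : forall j, 1 <= x j - v j.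
    move=> j; have [zx Ex] := Hx j; have [zv Ev] := Hv j; have := P1 j.
    rewrite Ex Ev -minus_IZR => /lt_0_IZR H; apply: IZR_le; lia.
  have : \rsum_(j < d) / a j <= \rsum_(j < d) ((x j - v j) / a j).
    apply: sum_le => j; have := Hge j; have := hia j; rewrite /Rdiv; nra.
  lra.
Qed.
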